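(* Let $\Omega\subset\mathbb{R}^n$ be a bounded domain, take $\omega=\Omega$, let $m\ge2$, $k\ge1$ be integers, let $y_0\in L^2(\Omega)$ with $y_0\notin\mathcal{S}_m$, and let $\bar a_1,\dots,\bar a_k$ be positive numbers. For each $i\in\{1,\dots,k\}$ put $$T_i=\frac{1}{\lambda_i}\ln\Big(1+\frac{\lambda_i}{\bar a_i}\,|\langle y_0,\xi_i\rangle|\Big).$$ Then Problem $(\mathcal{P})$ with $\{\bar a_i\}_{i=1}^k$ does not have the bang-bang property if either of the following holds: (i) $k\ge m$ and the numbers $T_1,\dots,T_m$ are not all the same; (ii) $k<m$, $\langle y_0,\xi_j\rangle=0$ for all $j=k+1,\dots,m$, and the numbers $T_1,\dots,T_k$ are not all the same.
   Context: Let $\Omega\subset\mathbb{R}^n$ be a bounded domain and $\omega\subset\Omega$ a nonempty open set with characteristic function $\chi_\omega$. Let $\{\xi_i\}_{i\ge1}$ be an orthonormal basis of $L^2(\Omega)$ consisting of eigenfunctions of $-\Delta$ with homogeneous Dirichlet boundary condition, with eigenvalues $0<\lambda_1<\lambda_2\le\lambda_3\le\cdots\to+\infty$; $\langle\cdot,\cdot\rangle$ is the $L^2(\Omega)$ inner product. For $u$ and $y_0\in L^2(\Omega)$, $y(\cdot;u,y_0):\mathbb{R}^+\to L^2(\Omega)$ denotes the solution of $\partial_t y-\Delta y=\chi_\omega u$ in $\Omega\times\mathbb{R}^+$, $y=0$ on $\partial\Omega\times\mathbb{R}^+$, $y(\cdot,0)=y_0$. For a fixed integer $m\ge2$, $\mathcal{S}_m=\mathrm{span}\{\xi_{m+1},\xi_{m+2},\dots\}$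 (closed linear span, i.e. the set of $y$ with $\langle y,\xi_i\rangle=0$ for $i\le m$). The control constraint set is $\mathcal{U}_{\{\bar a_i\}_{i=1}^k}=\{\sum_{i=1}^k\alpha_i(\cdot)\xi_i:\ \alpha_i \text{ measurable from }\mathbb{R}^+\text{ to }[-\bar a_i,\bar a_i]\}$. Problem $(\mathcal{P})$ with $\{\bar a_i\}_{i=1}^k$: $\inf\{t\ge0: y(t;u,y_0)\in\mathcal{S}_m\}$ over $u\in\mathcal{U}_{\{\bar a_i\}_{i=1}^k}$; the infimum $t^*$ is the optimal time and an admissible $u^*$ with $y(t^*;u^*,y_0)\in\mathcal{S}_m$ is an optimal control. The problem has the bang-bang property if every optimal control $u^*=\sum_{i=1}^k\alpha_i^*\xi_i$ satisfies, for each $i$, $|\alpha_i^*(t)|=\bar a_i$ for almost every $t\in(0,t^* )$. *)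

(* Defs.v *)
(* The state space L^2(Omega) is represented through
   its (isometric) coordinates in the orthonormal eigenbasis {xi_i}_{i>=1}:
   y is identified with the sequence i |-> <y, xi_i> (indices start at 1;
   index 0 is unused). *)
From HB Require Import structures.
From mathcomp Require Import all_boot all_order all_algebra.
From mathcomp Require Import all_classical all_reals all_analysis.
Set Implicit Arguments. Unset Strict Implicit. Unset Printing Implicit Defensive.
Import Order.TTheory GRing.Theory Num.Theory.
Import numFieldNormedType.Exports.
Local Open Scope classical_set_scope.
Local Open Scope ring_scope.

Section Heat.
Variable R : realType.

Definition in_Sm (m : nat) (y : nat -> R) : Prop :=
  forall i : nat, (1 <= i <= m)%N -> y i = 0.

(* u = \sum_{i=1}^k alpha_i xi_i, alpha_i measurable R^+ -> [-abar_i, abar_i] *)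
Definition admissible (k : nat) (abar : nat -> R) (alpha : nat -> R -> R) : Prop :=
  forall i : nat, (1 <= i <= k)%N ->
    measurable_fun (`[0%R, +oo[ : set R) (alpha i) /\
    (forall t : R, 0 <= t -> `|alpha i t| <= abar i).

(* <y(t; u, y0), xi_i> for the heat equation with omega = Omega (mild solution,
   Duhamel formula in the eigenbasis); c i = <y0, xi_i>. *)
Definition sol_coord (lam c : nat -> R) (k : nat) (alpha : nat -> R -> R)
    (i : nat) (t : R) : R :=
  expR (- (lam i * t)) * c i +
  (if (1 <= i <= k)%N then
     Rintegral (@lebesgue_measure R) `[0%R, t]
       (fun s => expR (- (lam i * (t - s))) * alpha i s)
   else 0).

Definition reach_set (lam c : nat -> R) (m k : nat) (abar : nat -> R) : set R :=
  [set t | 0 <= t /\ exists alpha, admissible k abar alpha /\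
                      in_Sm m (fun i => sol_coord lam c k alpha i t)].

Definition optimal_time (lam c : nat -> R) (m k : nat) (abar : nat -> R) : R :=
  inf (reach_set lam c m k abar).

Definition optimal_control (lam c : nat -> R) (m k : nat) (abar : nat -> R)
    (alpha : nat -> R -> R) : Prop :=
  admissible k abar alpha /\
  in_Sm m (fun i => sol_coord lam c k alpha i (optimal_time lam c m k abar)).

Definition bang_bang (lam c : nat -> R) (m k : nat) (abar : nat -> R) : Prop :=
  forall alpha, optimal_control lam c m k abar alpha ->
    forall i : nat, (1 <= i <= k)%N ->
      {ae (@lebesgue_measure R), forall t : R,
         (0 < t < optimal_time lam c m k abar) -> `|alpha i t| = abar i}.

Definition Ti (lam c abar : nat -> R) (i : nat) : R :=
  (lam i)^-1 * ln (1 + lam i / abar i * `|c i|).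

End Heat.

(* Main.v *)
Require Import Defs.
From HB Require Import structures.
From mathcomp Require Import all_boot all_order all_algebra.
From mathcomp Require Import all_classical all_reals all_analysis.
Set Implicit Arguments. Unset Strict Implicit. Unset Printing Implicit Defensive.
Import Order.TTheory GRing.Theory Num.Theory.
Import numFieldNormedType.Exports.
Local Open Scope classical_set_scope.
Local Open Scope ring_scope.
From mathcomp Require Import ring lra zify.

Lemma isd_expl (R : realType) (l z : R) :
  is_derive z 1 (fun x => expR (l * x)) (expR (l * z) * l).
Proof.
have h1 : is_derive z 1 (fun x : R => l * x) l.
  have := @is_deriveZ R R R (fun x => x) l z 1 1 (is_derive_id _ _); rewrite /GRing.scale/=.
  idtac.
  by rewrite ?mulr1 ?scaler1 /=; apply. 
exact: (is_derive1_comp (is_derive_expR _) h1).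
Qed.

Lemma cont_expl (R : realType) (l : R) : continuous (fun x : R => expR (l * x)).
Proof.
move=> z; apply: continuous_comp; last exact: continuous_expR.
by apply: continuousM => //; exact: cst_continuous.
Qed.

Lemma int_expl (R : realType) (l a b : R) : 0 < l -> a <= b ->
  \int[@lebesgue_measure R]_(x in `[a, b]) expR (l * x) =
  (expR (l * b) - expR (l * a)) / l.
Proof.
move=> l0; rewrite le_eqVlt => /predU1P[<-|ab].
  by rewrite set_itv1 Rintegral_set1 subrr mul0r.
rewrite /Rintegral (@continuous_FTC2 _ _ (fun x => l^-1 * expR (l * x))) //.
- by rewrite -EFinB /= -mulrBr mulrC.
- exact: continuous_subspaceT (@cont_expl R l).
- have cF : continuous (fun x : R => l^-1 * expR (l * x)).
    move=> z.
    have := (@continuousM R R (fun=> l^-1) (fun x => expR (l * x)) z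
      (@cst_continuous _ _ l^-1 z) (@cont_expl R l z)).
    exact.
  have hF : forall z : R, is_derive z (1:R) (fun x : R => l^-1 * expR (l * x))
     (l^-1 *: (expR (l * z) * l)).
    by move=> z; apply: is_deriveZ; exact: isd_expl.
  split.
  + move=> y _; exact: (@ex_derive _ _ _ _ _ _ _ (hF y)).
  + by apply/cvg_at_right_filter; exact: cF.
  + by apply/cvg_at_left_filter; exact: cF.
- move=> z _; rewrite derive1E.
  have h : is_derive z (1:R) (fun x : R => l^-1 * expR (l * x))
     (l^-1 *: (expR (l * z) * l)).
    by apply: is_deriveZ; exact: isd_expl.
  by rewrite (@derive_val _ _ _ _ _ _ _ h) /GRing.scale /= mulrC mulfK // gt_eqF.
Qed.

Section H.
Variable R : realType.
Local Notation mu := (@lebesgue_measure R).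

Lemma integ (l t M : R) (g : R -> R) :
  0 < l -> measurable_fun (`[0%R, +oo[ : set R) g -> (forall s, 0 <= s -> `|g s| <= M) ->
  mu.-integrable `[0%R, t] (EFin \o (fun s => expR (l * s) * g s)).
Proof.
move=> l0 mg gM.
apply: measurable_bounded_integrable => //.
- apply: (@le_lt_trans _ _ (mu `[0%R, t])); first exact: lexx.
  rewrite lebesgue_measure_itv /=; case: ifP => _; last exact: ltry.
  by rewrite -EFinB ltry.
- apply: measurable_realfun.measurable_funM.
  + exact: measurable_funS (measurable_realfun.continuous_measurable_fun (@cont_expl R l)).
  + apply: measurable_funS mg => //.
    by move=> x /=; rewrite !in_itv /= => /andP[-> _].
- exists (expR (l * `|t|) * M); split; first exact: num_real.
  move=> x Kx y /=; rewrite in_itv/= => /andP[y0 yt].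
  apply: le_trans (ltW Kx).
  rewrite normrM ger0_norm ?expR_ge0 //.
  apply: ler_pM; [exact: expR_ge0 | exact: normr_ge0 | | exact: gM].
  by rewrite ler_expR ler_pM2l //; exact: le_trans yt (ler_norm t).
Qed.

Lemma integ_exp (l t : R) : mu.-integrable `[0%R, t] (EFin \o (fun s => expR (l * s))).
Proof.
apply: continuous_compact_integrable; first exact: segment_compact.
exact: continuous_subspaceT (@cont_expl R l).
Qed.

Lemma sol_decomp (l t cc : R) (g : R -> R) :
  mu.-integrable `[0%R, t] (EFin \o (fun s => expR (l * s) * g s)) ->
  expR (- (l * t)) * cc +
    Rintegral mu `[0%R, t] (fun s => expR (- (l * (t - s))) * g s) =
  expR (- (l * t)) * (cc + Rintegral mu `[0%R, t] (fun s => expR (l * s) * g s)).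
Proof.
move=> ig.
rewrite (@eq_Rintegral _ _ _ mu _ (fun s => expR (- (l * t)) * (expR (l * s) * g s))).
  by rewrite RintegralZl // mulrDr.
move=> s _; rewrite mulrA -expRD; congr (expR _ * _); ring.
Qed.

Lemma bound_int (l t M : R) (g : R -> R) : 0 < l -> 0 <= t ->
  measurable_fun (`[0%R, +oo[ : set R) g -> (forall s, 0 <= s -> `|g s| <= M) ->
  `|Rintegral mu `[0%R, t] (fun s => expR (l * s) * g s)| <= M * (expR (l * t) - 1) / l.
Proof.
move=> l0 t0 mg gM.
have ig := integ t l0 mg gM.
apply: (le_trans (le_normr_Rintegral _ ig)) => //.
have iM : mu.-integrable `[0%R, t] (EFin \o (fun s => expR (l * s) * M)).
  apply: (@integ _ _ `|M|) => //; try exact: measurable_cst.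
apply: (le_trans (@le_Rintegral _ _ _ mu _ _ (fun s => expR (l * s) * M) _ _ iM _)) => //.
- exact: integrable_norm ig.
- move=> s /=; rewrite in_itv /= => /andP[s0 _].
  rewrite normrM ger0_norm ?expR_ge0 //.
  by apply: ler_wpM2l; [exact: expR_ge0 | exact: gM].
rewrite RintegralZr //; last exact: integ_exp.
by rewrite int_expl // mulr0 expR0 mulrC mulrA.
Qed.

Lemma ln_ge0' (x : R) : 1 <= x -> 0 <= ln x.
Proof. by move=> x1; rewrite -ln1 ler_ln ?posrE // (lt_le_trans ltr01). Qed.

Lemma calc (l cc ab t : R) : 0 < l -> 0 < ab ->
  l^-1 * ln (1 + l / ab * `|cc|) <= t ->
  expR (- (l * t)) * cc +
  Rintegral mu `[0%R, t] (fun s => expR (- (l * (t - s))) *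
     (- (Num.sg cc * ab) * \1_(`]-oo, l^-1 * ln (1 + l / ab * `|cc|)]) s)) = 0.
Proof.
set T := l^-1 * ln _ => l0 ab0 Tt.
have y0 : 0 < 1 + l / ab * `|cc|.
  by apply: (lt_le_trans ltr01); rewrite lerDl mulr_ge0 // divr_ge0 // ltW.
have T0 : 0 <= T.
  apply: mulr_ge0; first by rewrite invr_ge0 ltW.
  by apply: ln_ge0'; rewrite lerDl mulr_ge0 // divr_ge0 // ltW.
set K := - (Num.sg cc * ab).
have mg : measurable_fun (`[0%R, +oo[ : set R) (fun s => K * \1_(`]-oo, T]) s).
  apply: measurable_realfun.measurable_funM; first exact: measurable_cst.
  exact: measurable_realfun.measurable_indic.
have gM : forall s, 0 <= s -> `|K * \1_(`]-oo, T]) s| <= ab.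
  move=> s _; rewrite normrM /K normrN normrM (gtr0_norm ab0).
  have h1 : `|Num.sg cc| <= 1 by rewrite normr_sg; case: (_ != 0).
  have h2 : `|\1_(`]-oo, T]) s : R| <= 1.
    by rewrite indicE; case: (_ \in _); rewrite ?normr1 ?normr0.
  rewrite -[X in _ <= X]mulr1; apply: ler_pM => //.
  - by rewrite mulr_ge0 // ltW.
  - by rewrite -[X in _ <= X]mul1r ler_wpM2r // ltW.
have ig := integ t l0 mg gM.
rewrite (sol_decomp _ ig).
have := Rintegral_itvB ig (x := T).
rewrite !bnd_simp => /(_ T0 Tt) E.
have -> : Rintegral mu `[0%R, t] (fun s => expR (l * s) * (K * \1_(`]-oo, T]) s)) =
   Rintegral mu `[0%R, T] (fun s => expR (l * s) * (K * \1_(`]-oo, T]) s)).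
  apply/eqP; rewrite -subr_eq0; apply/eqP; rewrite E.
  rewrite (@eq_Rintegral _ _ _ mu _ (fun=> 0)); first by rewrite Rintegral_cst // mul0r.
  move=> s; rewrite inE /= in_itv /= => /andP[Ts _].
  rewrite indicE memNset ?mulr0 //= in_itv /=. by apply/negP; rewrite -ltNge.
rewrite (@eq_Rintegral _ _ _ mu _ (fun s => K * expR (l * s))); last first.
  move=> s; rewrite inE /= in_itv /= => /andP[_ sT].
  rewrite indicE mem_set; first by rewrite mulr1 mulrC.
  by rewrite /= in_itv /= sT.
rewrite RintegralZl //; last exact: integ_exp.
rewrite int_expl // mulr0 expR0 /T mulVKf ?gt_eqF // lnK ?posrE //.
rewrite /K {1}(numEsg cc).
apply/eqP; rewrite mulf_eq0; apply/orP; right; apply/eqP.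
rewrite addrAC subrr add0r.
by field; rewrite ?gt_eqF.
Qed.

Lemma lower (l cc ab t : R) (g : R -> R) : 0 < l -> 0 < ab -> 0 <= t ->
  measurable_fun (`[0%R, +oo[ : set R) g -> (forall s, 0 <= s -> `|g s| <= ab) ->
  expR (- (l * t)) * cc +
    Rintegral mu `[0%R, t] (fun s => expR (- (l * (t - s))) * g s) = 0 ->
  l^-1 * ln (1 + l / ab * `|cc|) <= t.
Proof.
move=> l0 ab0 t0 mg gM E.
rewrite (sol_decomp _ (integ t l0 mg gM)) in E.
move/eqP: E; rewrite mulf_eq0 gt_eqF ?expR_gt0 //= addr_eq0 => /eqP ccE.
have B := bound_int l0 t0 mg gM; rewrite -normrN -ccE in B.
have y0 : 0 < 1 + l / ab * `|cc|.
  by apply: (lt_le_trans ltr01); rewrite lerDl mulr_ge0 // divr_ge0 // ltW.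
rewrite ler_pdivrMl // -ler_expR lnK ?posrE //.
have h : l / ab * `|cc| <= l / ab * (ab * (expR (l * t) - 1) / l).
  by apply: ler_wpM2l => //; rewrite divr_ge0 // ltW.
have e : l / ab * (ab * (expR (l * t) - 1) / l) = expR (l * t) - 1.
  by field; rewrite ?gt_eqF.
rewrite e in h; lra.
Qed.

Lemma T_ge0 (l ab cc : R) : 0 < l -> 0 < ab -> 0 <= l^-1 * ln (1 + l / ab * `|cc|).
Proof.
move=> l0 ab0; apply: mulr_ge0; first by rewrite invr_ge0 ltW.
by apply: ln_ge0'; rewrite lerDl mulr_ge0 // divr_ge0 // ltW.
Qed.

Lemma alpha_meas (K T : R) :
  measurable_fun (`[0%R, +oo[ : set R) (fun s => K * \1_(`]-oo, T]) s).
Proof.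
apply: measurable_realfun.measurable_funM; first exact: measurable_cst.
exact: measurable_realfun.measurable_indic.
Qed.

Lemma alpha_bd (cc ab T s : R) : 0 < ab ->
  `|- (Num.sg cc * ab) * \1_(`]-oo, T]) s| <= ab.
Proof.
move=> ab0; rewrite normrM normrN normrM (gtr0_norm ab0).
have h1 : `|Num.sg cc| <= 1 by rewrite normr_sg; case: (_ != 0).
have h2 : `|\1_(`]-oo, T]) s : R| <= 1.
  by rewrite indicE; case: (_ \in _); rewrite ?normr1 ?normr0.
rewrite -[X in _ <= X]mulr1; apply: ler_pM => //.
- by rewrite mulr_ge0 // ltW.
- by rewrite -[X in _ <= X]mul1r ler_wpM2r // ltW.
Qed.

Lemma ex_max (f : nat -> R) n : (1 <= n)%N ->
  exists i, (1 <= i <= n)%N /\ forall j, (1 <= j <= n)%N -> f j <= f i.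
Proof.
elim: n => [//|n IH] _.
case: n IH => [|n] IH.
  by exists 1%N; split => // j hj; have -> : j = 1%N by lia.
have [i [hi hmax]] := IH isT.
have [le|lt] := leP (f n.+2) (f i).
  exists i; split; first lia.
  move=> j hj; have [hj'|->] : (1 <= j <= n.+1)%N \/ j = n.+2 by lia.
  - exact: hmax.
  - exact: le.
exists n.+2; split; first lia.
move=> j hj; have [hj'|->] : (1 <= j <= n.+1)%N \/ j = n.+2 by lia.
- exact: le_trans (hmax j hj') (ltW lt).
- exact: lexx.
Qed.

End H.

Unset Implicit Arguments.
Set Strict Implicit.

Theorem theorem2p2 (R : realType) (lam : nat -> R) (c : nat -> R)
  (m k : nat) (abar : nat -> R)
  (hlam_pos : forall i : nat, (1 <= i)%N -> 0 < lam i)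
  (hlam12 : lam 1%N < lam 2%N)
  (hlam_mono : forall i : nat, (1 <= i)%N -> lam i <= lam i.+1)
  (hlam_inf : lam @ \oo --> +oo)
  (hc : cvg (series (fun i => c i ^+ 2) @ \oo))
  (hm : (2 <= m)%N) (hk : (1 <= k)%N)
  (hy0 : ~ in_Sm m c)
  (habar : forall i : nat, (1 <= i <= k)%N -> 0 < abar i) :
  (((m <= k)%N /\
     exists i j : nat, (1 <= i <= m)%N /\ (1 <= j <= m)%N /\
                       Ti lam c abar i <> Ti lam c abar j)
   \/
   ((k < m)%N /\ (forall j : nat, (k < j <= m)%N -> c j = 0) /\
     exists i j : nat, (1 <= i <= k)%N /\ (1 <= j <= k)%N /\
                       Ti lam c abar i <> Ti lam c abar j)) ->
  ~ bang_bang lam c m k abar.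
Proof.
move=> H.
have [hN1 hNm hNk] : [/\ (1 <= minn m k)%N, (minn m k <= m)%N & (minn m k <= k)%N].
  by split; lia.
have [Hc0 [i1 [j1 [hi1 [hj1 hne]]]]] : (forall j, (minn m k < j <= m)%N -> c j = 0) /\
    exists i j, (1 <= i <= minn m k)%N /\ (1 <= j <= minn m k)%N /\
      Ti lam c abar i <> Ti lam c abar j.
  case: H => [[hmk [i [j [hi [hj hn]]]]] | [hkm [hcz [i [j [hi [hj hn]]]]]]].
  - split; first by move=> j' hj'; exfalso; move: hj'; lia.
    by exists i, j; split; [lia | split; [lia | exact: hn]].
  - split; first by move=> j' hj'; apply: hcz; move: hj'; lia.
    by exists i, j; split; [lia | split; [lia | exact: hn]].
set T := Ti lam c abar.
have [i0 [hi0 hmax]] := ex_max T hN1.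
have [j [hj hjlt]] : exists j, (1 <= j <= minn m k)%N /\ T j < T i0.
  case: (ltrP (T i1) (T i0)) => [l1|g1]; first by exists i1.
  case: (ltrP (T j1) (T i0)) => [l2|g2]; first by exists j1.
  exfalso; apply: hne.
  have e1 : T i1 = T i0 by apply: le_anti; rewrite g1 hmax.
  have e2 : T j1 = T i0 by apply: le_anti; rewrite g2 hmax.
  by rewrite -/T e1 e2.
have lamk : forall i, (1 <= i <= k)%N -> 0 < lam i.
  by move=> i /andP[h _]; exact: hlam_pos.
have T0 : forall i, (1 <= i <= k)%N -> 0 <= T i.
  by move=> i hi; apply: T_ge0; [exact: lamk | exact: habar].
pose alpha := fun i s => - (Num.sg (c i) * abar i) * \1_(`]-oo, T i]) s.
have adm : admissible k abar alpha.
  move=> i hi; split; first exact: alpha_meas.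
  by move=> t _; apply: alpha_bd; exact: habar.
have F2 : forall i t, (1 <= i <= k)%N -> T i <= t -> sol_coord lam c k alpha i t = 0.
  by move=> i t hi hT; rewrite /sol_coord hi; apply: calc => //; [exact: lamk | exact: habar].
have F3 : forall alpha' i t, admissible k abar alpha' -> (1 <= i <= k)%N -> 0 <= t ->
    sol_coord lam c k alpha' i t = 0 -> T i <= t.
  move=> a' i t ha hi t0; rewrite /sol_coord hi => E.
  have [ma ba] := ha i hi.
  exact: (lower (lamk i hi) (habar i hi) t0 ma ba E).
have hi0k : (1 <= i0 <= k)%N by lia.
have inS : in_Sm m (fun i => sol_coord lam c k alpha i (T i0)).
  move=> i hi; case: (leqP i k) => hik.
  - apply: F2; first lia.
    by apply: hmax; lia.
  - rewrite /sol_coord (_ : (1 <= i <= k)%N = false); last lia.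
    by rewrite (Hc0 i) ?mulr0 ?addr0 //; lia.
have reachTs : reach_set lam c m k abar (T i0).
  by split; [exact: T0 | exists alpha].
have lbT : forall t, reach_set lam c m k abar t -> T i0 <= t.
  move=> t [t0 [a' [ha hS]]].
  by apply: (F3 a' i0 t ha hi0k t0); apply: hS; lia.
have opt : optimal_time lam c m k abar = T i0.
  rewrite /optimal_time; apply/eqP; rewrite eq_le; apply/andP; split.
  - apply: ge_inf => //.
    by exists 0 => y [y0 _].
  - by apply: lb_le_inf; [exists (T i0) | exact: lbT].
have oc : optimal_control lam c m k abar alpha.
  by rewrite /optimal_control opt.
have hjk : (1 <= j <= k)%N by lia.
move=> BB; have := BB alpha oc j hjk; rewrite opt.
case=> A [mA A0 sub].
have sub' : `]T j, T i0[ `<=` A.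
  move=> x /=; rewrite in_itv /= => /andP[xa xb]; apply: sub => /= hP.
  have x0 : 0 < x by apply: le_lt_trans xa; apply: T0.
  have := hP; rewrite x0 xb /alpha indicE memNset /=; last first.
    by rewrite in_itv /=; apply/negP; rewrite -ltNge.
  rewrite mulr0 normr0 => /(_ isT) /esym /eqP.
  by rewrite gt_eqF //; apply: habar.
have h1 : (@lebesgue_measure R `]T j, T i0[ <= @lebesgue_measure R A)%E.
  exact: (le_measure lebesgue_measure (mem_set (measurable_itv `]T j, T i0[))
    (mem_set mA) sub').
move: h1; rewrite A0 lebesgue_measure_itv /= lte_fin hjlt -EFinD lee_fin.
by rewrite subr_le0 leNgt hjlt.
Qed.
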